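(* Let $\bar t>0$, $I=(0,\bar t)$, let $\gamma_1,\gamma_2\in\mathrm{Lip}(I)$ (extended continuously to $\bar I$) with $\gamma_1<0<\gamma_2$ on $I$ and $\gamma_1(0)=\gamma_1(\bar t)=\gamma_2(0)=\gamma_2(\bar t)=0$, let $D=\{(y,t)\in\mathbb W: t\in I,\ \gamma_1(t)<y<\gamma_2(t)\}$, and let $\phi\in C(\partial D)$ with $\phi_1,\phi_2\in\mathrm{Lip}(I)$. Assume $\zeta<1$. Then there exists a bi-Lipschitz increasing function $\lambda:\bar I\to\bar I$ such that: (i) $p_2(\lambda(s))-p_1(s)\in H_{p_1(s)}$ for all $s\in\bar I$; (ii) for all $s,\lambda'\in\bar I$, if $p_2(\lambda')-p_1(s)\in H_{p_1(s)}$ then $\lambda'=\lambda(s)$; (iii) $\lambda(0)=0$ and $\lambda(\bar t)=\bar t$; (iv) $\frac{1-\zeta}{1+\zeta}\le\mathrm{Lip}(\lambda)\le\frac{1+\zeta}{1-\zeta}$ and $\frac{1-\zeta}{1+\zeta}\le\mathrm{Lip}(\lambda^{-1})\le\frac{1+\zeta}{1-\zeta}$.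
   Context: $\mathbb H$ is $\mathbb R^3$ with product $(x,y,t)\cdot(\xi,\eta,\tau)=(x+\xi,y+\eta,t+\tau+2(y\xi-x\eta))$; $X=\partial_x+2y\partial_t$, $Y=\partial_y-2x\partial_t$, and $H_p=\mathrm{span}\{X(p),Y(p)\}$ (a linear subspace of $\mathbb R^3$). $\mathbb W=\{x=0\}$ with coordinates $(y,t)$. Set $\phi_i(s)=\phi(\gamma_i(s),s)$, $\|\gamma\|_\infty=\max_i\|\gamma_i\|_\infty$, $\mathrm{Lip}(\gamma)=\max_i\mathrm{Lip}(\gamma_i)$, $\|\phi\|_\infty=\max_i\|\phi_i\|_\infty$, $\mathrm{Lip}(\phi)=\max_i\mathrm{Lip}(\phi_i)$, $\zeta=4(\|\gamma\|_\infty+\mathrm{Lip}(\gamma))(\|\phi\|_\infty+\mathrm{Lip}(\phi))$, and $p_i(s)=(\phi_i(s),\gamma_i(s),s+2\gamma_i(s)\phi_i(s))$ for $s\in\bar I$, $i=1,2$. *)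

(* Defs.v *)
From HB Require Import structures.
From mathcomp Require Import all_boot all_order all_algebra.
From mathcomp Require Import all_classical all_reals all_analysis.
Set Implicit Arguments. Unset Strict Implicit. Unset Printing Implicit Defensive.
Import Order.TTheory GRing.Theory Num.Theory.
Import numFieldNormedType.Exports.
Local Open Scope classical_set_scope.
Local Open Scope ring_scope.

Section Defs.
Variable R : realType.

(* Points of the Heisenberg group H = R^3, written (x, y, t). *)
Definition hpt := (R * R * R)%type.

Definition hsub (p q : hpt) : hpt :=
  (p.1.1 - q.1.1, p.1.2 - q.1.2, p.2 - q.2).

(* X(p) = d_x + 2y d_t, Y(p) = d_y - 2x d_t, as vectors of R^3. *)
Definition Xvec (p : hpt) : hpt := (1, 0, 2 * p.1.2).
Definition Yvec (p : hpt) : hpt := (0, 1, - (2 * p.1.1)).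

Definition in_horiz (p v : hpt) : Prop :=
  exists a b : R, v = (a * (Xvec p).1.1 + b * (Yvec p).1.1,
                       a * (Xvec p).1.2 + b * (Yvec p).1.2,
                       a * (Xvec p).2 + b * (Yvec p).2).

Definition supnorm (f : R -> R) (A : set R) : R := sup [set `|f x| | x in A].

Definition lipc (f : R -> R) (A : set R) : R :=
  sup [set r | exists x y, A x /\ A y /\ x != y /\ r = `|f x - f y| / `|x - y|].

Definition is_lip_on (f : R -> R) (A : set R) : Prop :=
  exists k : R, forall x y, A x -> A y -> `|f x - f y| <= k * `|x - y|.

(* topological boundary of a subset of W = R^2 (coordinates (y,t)) *)
Definition bdry (A : set (R * R)) : set (R * R) := closure A `\` interior A.

Definition domD (tbar : R) (g1 g2 : R -> R) : set (R * R) :=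
  [set q | 0 < q.2 < tbar /\ g1 q.2 < q.1 < g2 q.2].

Definition pcurve (phii gi : R -> R) (s : R) : hpt :=
  (phii s, gi s, s + 2 * gi s * phii s).

Definition Iopen (tbar : R) : set R := `]0, tbar[%classic.
Definition Iclosed (tbar : R) : set R := `[0, tbar]%classic.

End Defs.

(* Main.v *)
Require Import Defs.
From HB Require Import structures.
From mathcomp Require Import all_boot all_order all_algebra.
From mathcomp Require Import all_classical all_reals all_analysis.
From mathcomp Require Import ring lra.
Import Order.TTheory GRing.Theory Num.Theory.
Import numFieldNormedType.Exports.
Local Open Scope classical_set_scope.
Local Open Scope ring_scope.


Lemma IcP {R : realType} (tbar x : R) : Iclosed tbar x <-> (0 <= x <= tbar).
Proof. by rewrite /Iclosed /= in_itv. Qed.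
Lemma IoP {R : realType} (tbar x : R) : Iopen tbar x <-> (0 < x < tbar).
Proof. by rewrite /Iopen /= in_itv. Qed.

Lemma normM_le {R : realType} (a b al be : R) :
  `|a| <= al -> `|b| <= be -> `|a * b| <= al * be.
Proof. by move=> ha hb; rewrite normrM; apply: ler_pM. Qed.

Lemma supnorm_ge {R : realType} (f : R -> R) (A : set R) :
  (exists M, forall x, A x -> `|f x| <= M) -> forall x, A x -> `|f x| <= supnorm f A.
Proof.
move=> [M HM] x Ax; apply: ub_le_sup; last by exists x.
by exists M => _ [y Ay <-]; exact: HM.
Qed.

Lemma lipc_ge {R : realType} (f : R -> R) (A : set R) :
  is_lip_on f A -> forall x y, A x -> A y -> `|f x - f y| <= lipc f A * `|x - y|.
Proof.
move=> [k Hk] x y Ax Ay.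
have [->|nxy] := eqVneq x y; first by rewrite !subrr normr0 mulr0.
have hp : 0 < `|x - y| by rewrite normr_gt0 subr_eq0.
rewrite -ler_pdivrMr //; apply: ub_le_sup; last by exists x, y.
exists k => _ [x' [y' [Ax' [Ay' [nxy' ->]]]]].
have hp' : 0 < `|x' - y'| by rewrite normr_gt0 subr_eq0.
by rewrite ler_pdivrMr //; exact: Hk.
Qed.

Lemma lipc_ge0 {R : realType} (f : R -> R) (tbar : R) : 0 < tbar ->
  is_lip_on f (Iopen tbar) -> 0 <= lipc f (Iopen tbar).
Proof.
move=> t0 [k Hk].
have A1 : Iopen tbar (tbar / 4) by apply/IoP; apply/andP; split; lra.
have A2 : Iopen tbar (tbar / 2) by apply/IoP; apply/andP; split; lra.
apply: (@le_trans _ _ (`|f (tbar/4) - f (tbar/2)| / `|tbar/4 - tbar/2|)).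
  by rewrite divr_ge0.
apply: ub_le_sup.
  exists k => _ [x' [y' [Ax' [Ay' [nxy' ->]]]]].
  have hp' : 0 < `|x' - y'| by rewrite normr_gt0 subr_eq0.
  by rewrite ler_pdivrMr //; exact: Hk.
exists (tbar/4), (tbar/2); do 3 split => //.
by apply/eqP; lra.
Qed.

Lemma bounded_of_lip {R : realType} (f : R -> R) (tbar : R) : 0 < tbar ->
  is_lip_on f (Iopen tbar) -> exists M, forall x, Iopen tbar x -> `|f x| <= M.
Proof.
move=> t0 [k Hk].
have A2 : Iopen tbar (tbar / 2) by apply/IoP; apply/andP; split; lra.
exists (`|f (tbar/2)| + `|k| * tbar) => x Ax.
have h := Hk x _ Ax A2.
have : `|x - tbar/2| <= tbar.
  move/IoP: Ax => /andP[? ?].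
  by rewrite ler_norml; apply/andP; split; lra.
have := ler_normD (f x - f (tbar/2)) (f (tbar/2)); rewrite subrK.
have := ler_norm k; have := normr_ge0 (x - tbar/2); have := normr_ge0 k.
nra.
Qed.


Definition happrox {R : realType} (tbar : R) (f : R -> R) (x : R) :=
  forall e, 0 < e -> exists s, Iopen tbar s /\ `|s - x| < e /\ `|f s - f x| < e.

Lemma ext_bounds {R : realType} (tbar : R) (f : R -> R) (M L : R) :
  0 <= L ->
  (forall x, Iopen tbar x -> `|f x| <= M) ->
  (forall x y, Iopen tbar x -> Iopen tbar y -> `|f x - f y| <= L * `|x - y|) ->
  (forall x, Iclosed tbar x -> happrox tbar f x) ->
  (forall x, Iclosed tbar x -> `|f x| <= M) /\
  (forall x y, Iclosed tbar x -> Iclosed tbar y -> `|f x - f y| <= L * `|x - y|).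
Proof.
move=> L0 HM HL Ha; split.
  move=> x Ax; apply/ler_addgt0Pr => e e0.
  have [s [As [_ hs]]] := Ha x Ax e e0.
  have := HM s As.
  have := ler_normD (f x - f s) (f s); rewrite subrK distrC.
  lra.
move=> x y Ax Ay; apply/ler_addgt0Pr => e e0.
have e1 : 0 < e / (3 + 3 * L) by apply: divr_gt0 => //; lra.
have [s [As [hs1 hs2]]] := Ha x Ax _ e1.
have [s' [As' [hs1' hs2']]] := Ha y Ay _ e1.
have h := HL s s' As As'.
have t1 : `|f x - f y| <= `|f s - f x| + `|f s - f s'| + `|f s' - f y|.
  have -> : f x - f y = - (f s - f x) + (f s - f s') + (f s' - f y) by ring.
  by rewrite -(normrN (f s - f x)); apply: le_trans (ler_normD _ _) _; rewrite lerD2r ler_normD.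
have t2 : `|s - s'| <= `|s - x| + `|x - y| + `|s' - y|.
  have -> : s - s' = (s - x) + (x - y) - (s' - y) by ring.
  by apply: le_trans (ler_normD _ _) _; rewrite normrN lerD2r ler_normD.
have t3 : L * `|s - s'| <= L * (`|s - x| + `|x - y| + `|s' - y|) by apply: ler_wpM2l.
set d := e / (3 + 3 * L) in e1 hs1 hs2 hs1' hs2'.
have hd : d * (3 + 3 * L) = e by rewrite /d divfK //; apply/eqP; lra.
have : L * `|s - x| <= L * d by apply: ler_wpM2l => //; apply: ltW.
have : L * `|s' - y| <= L * d by apply: ler_wpM2l => //; apply: ltW.
nra.
Qed.

Lemma near_open {R : realType} {tbar x d : R} : 0 < tbar -> Iclosed tbar x -> 0 < d ->
  exists s, Iopen tbar s /\ `|s - x| < d.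
Proof.
move=> t0 /IcP /andP[x0 x1] d0.
set del := Num.min d tbar / 2.
have h1 : del <= d / 2 by rewrite /del ler_pM2r // ge_min lexx.
have h2 : del <= tbar / 2 by rewrite /del ler_pM2r // ge_min lexx orbT.
have h3 : 0 < del by rewrite /del divr_gt0 // lt_min d0 t0.
have [hx|hx] := leP x (tbar / 2).
  exists (x + del / 2); split; first by apply/IoP; apply/andP; split; lra.
  by rewrite addrC addKr gtr0_norm; lra.
exists (x - del / 2); split; first by apply/IoP; apply/andP; split; lra.
by rewrite addrC addKr normrN gtr0_norm; lra.
Qed.

Lemma within_ed {R : realType} {T : pseudoMetricType R} (A : set T) (f : T -> R) x :
  {within A, continuous f} -> A x -> forall e : R, 0 < e ->
  exists2 d : R, 0 < d & forall y, A y -> ball x d y -> `|f x - f y| < e.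
Proof.
move=> /subspace_continuousP cf Ax e e0.
move: (cf x Ax) => /cvgr_dist_lt/(_ _ e0).
move=> /nbhs_ballP[d d0 Hd]; exists d => // y Ay bxy.
exact: (Hd y bxy Ay).
Qed.
Arguments within_ed {R T A f x}.

Lemma approx_cont {R : realType} (tbar : R) (f : R -> R) : 0 < tbar ->
  {within Iclosed tbar, continuous f} -> forall x, Iclosed tbar x -> happrox tbar f x.
Proof.
move=> t0 cf x Ax e e0.
have [d d0 Hd] := within_ed cf Ax _ e0.
have md : 0 < Num.min d e by rewrite lt_min d0 e0.
have [s [As hs]] := near_open t0 Ax md.
exists s; split => //.
move: hs; rewrite lt_min => /andP[h1 h2]; split => //.
rewrite distrC; apply: Hd.
  by move/IoP: As => /andP[? ?]; apply/IcP; apply/andP; split; lra.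
by rewrite /ball /= distrC.
Qed.


Lemma bdry_of {R : realType} (D : set (R * R)) (p : R * R) :
  (forall e : R, 0 < e -> exists q, D q /\ ball p e q) ->
  (forall e : R, 0 < e -> exists q, ~ D q /\ ball p e q) -> bdry D p.
Proof.
move=> hin hout; split.
  move=> B /nbhs_ballP[e e0 HB].
  have [q [Dq bq]] := hin e e0.
  by exists q; split => //; exact: HB.
move=> /nbhs_ballP[e e0 HB].
have [q [Dq bq]] := hout e e0.
exact: Dq (HB q bq).
Qed.

Lemma ballRR {R : realType} (a b c d e : R) :
  `|a - c| < e -> `|b - d| < e -> ball (a, b) e (c, d).
Proof. by move=> h1 h2; split; rewrite /ball /=. Qed.


Lemma bd_g1 {R : realType} {tbar : R} {g1 g2 : R -> R} (hg : forall s, Iopen tbar s -> g1 s < 0 < g2 s) s : Iopen tbar s -> bdry (domD tbar g1 g2) (g1 s, s).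
Proof.
move=> As; have /andP[h1 h2] := hg _ As; move/IoP: As => As.
apply: bdry_of => e e0.
  set m := Num.min e (- g1 s).
  have m0 : 0 < m by rewrite lt_min e0 oppr_gt0 h1.
  have me : m <= e by rewrite ge_min lexx.
  have mg : m <= - g1 s by rewrite ge_min lexx orbT.
  exists (g1 s + m / 2, s); split.
    split => //=; apply/andP; split; lra.
  by apply: ballRR; rewrite ?subrr ?normr0 // opprD addNKr normrN gtr0_norm; lra.
exists (g1 s - e / 2, s); split.
  by move=> [_ /= /andP[h _]]; lra.
by apply: ballRR; rewrite ?subrr ?normr0 // opprD addNKr opprK gtr0_norm; lra.
Qed.

Lemma bd_g2 {R : realType} {tbar : R} {g1 g2 : R -> R} (hg : forall s, Iopen tbar s -> g1 s < 0 < g2 s) s : Iopen tbar s -> bdry (domD tbar g1 g2) (g2 s, s).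
Proof.
move=> As; have /andP[h1 h2] := hg _ As; move/IoP: As => As.
apply: bdry_of => e e0.
  set m := Num.min e (g2 s).
  have m0 : 0 < m by rewrite lt_min e0 h2.
  have me : m <= e by rewrite ge_min lexx.
  have mg : m <= g2 s by rewrite ge_min lexx orbT.
  exists (g2 s - m / 2, s); split.
    split => //=; apply/andP; split; lra.
  by apply: ballRR; rewrite ?subrr ?normr0 // opprD addNKr opprK gtr0_norm; lra.
exists (g2 s + e / 2, s); split.
  by move=> [_ /= /andP[_ h]]; lra.
by apply: ballRR; rewrite ?subrr ?normr0 // opprD addNKr normrN gtr0_norm; lra.
Qed.

Lemma bd_0 {R : realType} {tbar : R} {g1 g2 : R -> R} (t0 : 0 < tbar) (hg : forall s, Iopen tbar s -> g1 s < 0 < g2 s) : bdry (domD tbar g1 g2) (0, 0).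
Proof.
apply: bdry_of => e e0.
  set m := Num.min e tbar.
  have m0 : 0 < m by rewrite lt_min e0 t0.
  have me : m <= e by rewrite ge_min lexx.
  have mg : m <= tbar by rewrite ge_min lexx orbT.
  have As : Iopen tbar (m / 2) by apply/IoP; apply/andP; split; lra.
  exists (0, m / 2); split.
    by split => /=; [move/IoP: As | exact: hg].
  by apply: ballRR; rewrite ?subrr ?normr0 // sub0r normrN gtr0_norm; lra.
exists (0, - (e / 2)); split.
  by move=> [/= /andP[h _] _]; lra.
by apply: ballRR; rewrite ?subrr ?normr0 // sub0r opprK gtr0_norm; lra.
Qed.

Lemma bd_t {R : realType} {tbar : R} {g1 g2 : R -> R} (t0 : 0 < tbar) (hg : forall s, Iopen tbar s -> g1 s < 0 < g2 s) : bdry (domD tbar g1 g2) (0, tbar).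
Proof.
apply: bdry_of => e e0.
  set m := Num.min e tbar.
  have m0 : 0 < m by rewrite lt_min e0 t0.
  have me : m <= e by rewrite ge_min lexx.
  have mg : m <= tbar by rewrite ge_min lexx orbT.
  have As : Iopen tbar (tbar - m / 2) by apply/IoP; apply/andP; split; lra.
  exists (0, tbar - m / 2); split.
    by split => /=; [move/IoP: As | exact: hg].
  by apply: ballRR; rewrite ?subrr ?normr0 // opprD addNKr opprK gtr0_norm; lra.
exists (0, tbar + e / 2); split.
  by move=> [/= /andP[_ h] _]; lra.
by apply: ballRR; rewrite ?subrr ?normr0 // opprD addNKr normrN gtr0_norm; lra.
Qed.



Lemma approx_end {R : realType} (tbar : R) (B : set (R * R)) (g : R -> R) (phi : R * R -> R) x0 :
  0 < tbar -> Iclosed tbar x0 -> g x0 = 0 ->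
  {within Iclosed tbar, continuous g} -> {within B, continuous phi} ->
  B (0, x0) -> (forall s, Iopen tbar s -> B (g s, s)) ->
  happrox tbar (fun s => phi (g s, s)) x0.
Proof.
move=> t0 Ax0 gx0 cg cphi B0 Bs e e0.
have [d1 d10 H1] := within_ed cphi B0 _ e0.
have [d2 d20 H2] := within_ed cg Ax0 _ d10.
have md : 0 < Num.min (Num.min d1 d2) e by rewrite !lt_min d10 d20 e0.
have [s [As hs]] := near_open t0 Ax0 md.
move: hs; rewrite !lt_min => /andP[/andP[h1 h2] h3].
exists s; split => //; split => //=.
rewrite gx0 distrC; apply: H1; first exact: Bs.
have As' : Iclosed tbar s by move/IoP: As => /andP[? ?]; apply/IcP; apply/andP; split; lra.
have := H2 s As' _; rewrite gx0 => /(_ _) h.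
apply: ballRR; last by rewrite distrC.
by apply: h; rewrite /ball /= distrC.
Qed.

Lemma approx_phi {R : realType} (tbar : R) (B : set (R * R)) (g : R -> R) (phi : R * R -> R) :
  0 < tbar -> g 0 = 0 -> g tbar = 0 ->
  {within Iclosed tbar, continuous g} -> {within B, continuous phi} ->
  B (0, 0) -> B (0, tbar) -> (forall s, Iopen tbar s -> B (g s, s)) ->
  forall x, Iclosed tbar x -> happrox tbar (fun s => phi (g s, s)) x.
Proof.
move=> t0 g0 gt cg cphi B0 Bt Bs x Ax.
have [->|x0] := eqVneq x 0.
  by apply: approx_end => //; apply/IcP; apply/andP; split; lra.
have [->|xt] := eqVneq x tbar.
  by apply: approx_end => //; apply/IcP; apply/andP; split; lra.
have Ax' : Iopen tbar x.
  move/IcP: Ax => /andP[a b]; apply/IoP; apply/andP; split.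
    by rewrite lt_neqAle eq_sym x0.
  by rewrite lt_neqAle xt.
by move=> e e0; exists x; rewrite !subrr normr0.
Qed.


Lemma exists_zero {R : realType} (a b K : R) (h : R -> R) :
  a <= b -> 0 < K -> h a <= 0 -> 0 <= h b ->
  (forall x y, a <= x -> x <= y -> y <= b -> h y - h x <= K * (y - x)) ->
  exists c, a <= c <= b /\ h c = 0.
Proof.
move=> ab K0 ha hb hK.
set S := [set x | a <= x <= b /\ h x <= 0].
have Sa : S a by split => //; rewrite lexx ab.
have ubS : ubound S b by move=> x [/andP[_ ?] _].
have hasub : has_ubound S by exists b.
set m := sup S.
have am : a <= m by apply: ub_le_sup => //.
have mb : m <= b by apply: ge_sup => //; exists a.
exists m; split; first by rewrite am mb.
have [hm|hm|//] := ltgtP (h m) 0.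
- have mb' : m < b by rewrite lt_neqAle mb andbT; apply/eqP => mE; move: hb; rewrite -mE; lra.
  set del := Num.min (b - m) (- h m / K).
  have d0 : 0 < del by rewrite lt_min subr_gt0 mb' /= divr_gt0 // oppr_gt0.
  have d1 : del <= b - m by rewrite ge_min lexx.
  have d2 : K * del <= - h m.
    have : del <= - h m / K by rewrite ge_min lexx orbT.
    by rewrite ler_pdivlMr // mulrC.
  have S' : S (m + del).
    split; first by apply/andP; split; lra.
    have := hK m (m + del) am ltac:(lra) ltac:(lra).
    rewrite addrAC subrr add0r; lra.
  have := ub_le_sup hasub S'; rewrite -/m; lra.
- have eps0 : 0 < h m / K by rewrite divr_gt0.
  have [e Se he] := sup_adherent eps0 (conj (ex_intro _ a Sa) hasub).
  rewrite -/m in he.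
  have em : e <= m by apply: ub_le_sup.
  case: Se => /andP[ae eb] hle.
  have := hK e m ae em mb.
  have : K * (m - e) < K * (h m / K) by rewrite ltr_pM2l //; lra.
  rewrite [K * (h m / K)]mulrC divfK ?gt_eqF //; lra.
Qed.

Lemma divle {R : realType} (a b p q : R) : 0 < a -> a * p <= b * q -> p <= b / a * q.
Proof. by move=> a0 h; rewrite mulrAC ler_pdivlMr // mulrC. Qed.
Lemma divge {R : realType} (a b p q : R) : 0 < b -> a * p <= b * q -> a / b * p <= q.
Proof. by move=> b0 h; rewrite mulrAC ler_pdivrMr // [q * b]mulrC. Qed.

Lemma lipc_bounds {R : realType} (tbar c1 c2 : R) (f : R -> R) : 0 < tbar ->
  (forall x y, Iclosed tbar x -> Iclosed tbar y ->
     c1 * `|x - y| <= `|f x - f y| <= c2 * `|x - y|) ->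
  c1 <= lipc f (Iclosed tbar) <= c2.
Proof.
move=> t0 H.
have A0 : Iclosed tbar 0 by apply/IcP; rewrite lexx ltW.
have At : Iclosed tbar tbar by apply/IcP; rewrite lexx ltW.
have ub : ubound [set r | exists x y, Iclosed tbar x /\ Iclosed tbar y /\ x != y /\
    r = `|f x - f y| / `|x - y|] c2.
  move=> _ [x [y [Ax [Ay [nxy ->]]]]].
  have hp : 0 < `|x - y| by rewrite normr_gt0 subr_eq0.
  by rewrite ler_pdivrMr //; have /andP[_ ->] := H x y Ax Ay.
have mem : [set r | exists x y, Iclosed tbar x /\ Iclosed tbar y /\ x != y /\
    r = `|f x - f y| / `|x - y|] (`|f 0 - f tbar| / `|0 - tbar|).
  by exists 0, tbar; do 3 split => //; rewrite eq_sym gt_eqF.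
apply/andP; split; last by apply: ge_sup => //; eexists; exact: mem.
apply: le_trans (ub_le_sup (ex_intro _ c2 ub) mem).
have hp : 0 < `|0 - tbar| by rewrite normr_gt0 subr_eq0 eq_sym gt_eqF.
by rewrite ler_pdivlMr //; have /andP[-> _] := H 0 tbar A0 At.
Qed.


Lemma core_thm {R : realType} (tbar : R) (g1 g2 f1 f2 : R -> R) (G Lg P Lp : R) :
  0 < tbar -> 4 * (G + Lg) * (P + Lp) < 1 -> 0 <= Lg -> 0 <= Lp ->
  (forall x, Iclosed tbar x -> `|g1 x| <= G) ->
  (forall x, Iclosed tbar x -> `|g2 x| <= G) ->
  (forall x, Iclosed tbar x -> `|f1 x| <= P) ->
  (forall x, Iclosed tbar x -> `|f2 x| <= P) ->
  (forall x y, Iclosed tbar x -> Iclosed tbar y -> `|g1 x - g1 y| <= Lg * `|x - y|) ->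
  (forall x y, Iclosed tbar x -> Iclosed tbar y -> `|g2 x - g2 y| <= Lg * `|x - y|) ->
  (forall x y, Iclosed tbar x -> Iclosed tbar y -> `|f1 x - f1 y| <= Lp * `|x - y|) ->
  (forall x y, Iclosed tbar x -> Iclosed tbar y -> `|f2 x - f2 y| <= Lp * `|x - y|) ->
  g1 0 = 0 -> g1 tbar = 0 -> g2 0 = 0 -> g2 tbar = 0 ->
  let z := 4 * (G + Lg) * (P + Lp) in
  let F := fun s l => l - s + 2 * (g2 l - g1 s) * (f2 l + f1 s) in
  exists lam lami : R -> R,
    ((forall s, Iclosed tbar s -> Iclosed tbar (lam s)) /\
     (forall s, Iclosed tbar s -> Iclosed tbar (lami s)) /\
     (forall s, Iclosed tbar s -> lami (lam s) = s /\ lam (lami s) = s) /\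
     (forall s s', Iclosed tbar s -> Iclosed tbar s' -> s < s' -> lam s < lam s') /\
     is_lip_on lam (Iclosed tbar) /\ is_lip_on lami (Iclosed tbar)) /\
    (forall s, Iclosed tbar s -> F s (lam s) = 0) /\
    (forall s l, Iclosed tbar s -> Iclosed tbar l -> F s l = 0 -> l = lam s) /\
    (lam 0 = 0 /\ lam tbar = tbar) /\
    ((1 - z) / (1 + z) <= lipc lam (Iclosed tbar) <= (1 + z) / (1 - z) /\
     (1 - z) / (1 + z) <= lipc lami (Iclosed tbar) <= (1 + z) / (1 - z)).
Proof.
move=> t0 hz Lg0 Lp0 bg1 bg2 bf1 bf2 lg1 lg2 lf1 lf2 g10 g1t g20 g2t z F.
have A0 : Iclosed tbar 0 by apply/IcP; rewrite lexx ltW.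
have At : Iclosed tbar tbar by apply/IcP; rewrite lexx ltW.
have G0 : 0 <= G by apply: le_trans (bg1 0 A0).
have P0 : 0 <= P by apply: le_trans (bf1 0 A0).
have z0 : 0 <= z by rewrite /z !mulr_ge0 // addr_ge0.
have z1 : z < 1 by [].
have fin : forall u : R, 2 * (Lg * `|u| * (P + P) + (G + G) * (Lp * `|u|)) <= z * `|u|.
  move=> u; have := normr_ge0 u => u0.
  have : 0 <= (G * P + Lg * Lp) * `|u| by rewrite mulr_ge0 // addr_ge0 // mulr_ge0.
  rewrite /z; lra.
have K1 : forall s l l', Iclosed tbar s -> Iclosed tbar l -> Iclosed tbar l' ->
    `|F s l - F s l' - (l - l')| <= z * `|l - l'|.
  move=> s l l' As Al Al'; rewrite /F.
  have -> : l - s + 2 * (g2 l - g1 s) * (f2 l + f1 s) -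
      (l' - s + 2 * (g2 l' - g1 s) * (f2 l' + f1 s)) - (l - l') =
      2 * ((g2 l - g2 l') * (f2 l + f1 s) + (g2 l' - g1 s) * (f2 l - f2 l')) by ring.
  apply: le_trans (fin (l - l')).
  rewrite normrM ger0_norm // ler_pM2l //.
  apply: le_trans (ler_normD _ _) _; apply: lerD; apply: normM_le.
  - exact: lg2.
  - by apply: le_trans (ler_normD _ _) _; apply: lerD; [apply: bf2 | apply: bf1].
  - by apply: le_trans (ler_normB _ _) _; apply: lerD; [apply: bg2 | apply: bg1].
  - exact: lf2.
have K2 : forall s s' l, Iclosed tbar s -> Iclosed tbar s' -> Iclosed tbar l ->
    `|F s l - F s' l + (s - s')| <= z * `|s - s'|.
  move=> s s' l As As' Al; rewrite /F.
  have -> : l - s + 2 * (g2 l - g1 s) * (f2 l + f1 s) -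
      (l - s' + 2 * (g2 l - g1 s') * (f2 l + f1 s')) + (s - s') =
      2 * ((g1 s' - g1 s) * (f2 l + f1 s) + (g2 l - g1 s') * (f1 s - f1 s')) by ring.
  apply: le_trans (fin (s - s')).
  rewrite normrM ger0_norm // ler_pM2l //.
  apply: le_trans (ler_normD _ _) _; apply: lerD; apply: normM_le.
  - by rewrite distrC; exact: lg1.
  - by apply: le_trans (ler_normD _ _) _; apply: lerD; [apply: bf2 | apply: bf1].
  - by apply: le_trans (ler_normB _ _) _; apply: lerD; [apply: bg2 | apply: bg1].
  - exact: lf1.
have F00 : F 0 0 = 0 by rewrite /F g10 g20; ring.
have Ftt : F tbar tbar = 0 by rewrite /F g1t g2t; ring.
have IcE : forall x, Iclosed tbar x -> 0 <= x /\ x <= tbar.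
  by move=> x /IcP /andP[].
have IcI : forall x, 0 <= x -> x <= tbar -> Iclosed tbar x.
  by move=> x a b; apply/IcP; rewrite a b.
have uniq : forall s l l', Iclosed tbar s -> Iclosed tbar l -> Iclosed tbar l' ->
    F s l = 0 -> F s l' = 0 -> l = l'.
  move=> s l l' As Al Al' h h'.
  have := K1 s l l' As Al Al'; rewrite h h' subrr sub0r normrN => hh.
  have : `|l - l'| <= 0 by have := normr_ge0 (l - l'); nra.
  by rewrite normr_le0 subr_eq0 => /eqP.
have ex1 : forall s, Iclosed tbar s -> exists l, Iclosed tbar l /\ F s l = 0.
  move=> s As; have [s0 s1] := IcE s As.
  have [c [/andP[c0 c1] hc]] : exists c, 0 <= c <= tbar /\ F s c = 0.
    apply: (@exists_zero _ 0 tbar (1 + z)) => //.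
    - by rewrite ltW.
    - lra.
    - have := K2 s 0 0 As A0 A0; rewrite F00 subr0 subr0 (ger0_norm s0) ler_norml => /andP[_ h].
      have : z * s <= s by nra.
      lra.
    - have hts : 0 <= tbar - s by lra.
      have := K2 s tbar tbar As At At; rewrite Ftt subr0 (distrC s) (ger0_norm hts).
      rewrite ler_norml => /andP[h _]; have : z * (tbar - s) <= tbar - s by nra.
      lra.
    - move=> x y x0 xy yb.
      have hyx : 0 <= y - x by lra.
      have := K1 s y x As (IcI y ltac:(lra) yb) (IcI x x0 ltac:(lra)).
      rewrite (ger0_norm hyx) ler_norml => /andP[_ h]; lra.
  by exists c; split => //; apply: IcI.
pose lam := fun s => xget 0 [set l | Iclosed tbar l /\ F s l = 0].
have lamP : forall s, Iclosed tbar s -> Iclosed tbar (lam s) /\ F s (lam s) = 0.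
  move=> s As; exact: (xgetPex 0 (ex1 s As)).
have KE : forall s s', Iclosed tbar s -> Iclosed tbar s' ->
    `|(lam s' - lam s) - (s' - s)| <= z * `|lam s' - lam s| + z * `|s' - s|.
  move=> s s' As As'.
  have [Al Fl] := lamP s As; have [Al' Fl'] := lamP s' As'.
  have e : lam s' - lam s - (s' - s) =
     - ((F s' (lam s') - F s' (lam s) - (lam s' - lam s)) + (F s' (lam s) - F s (lam s) + (s' - s)))
     + F s' (lam s') - F s (lam s) by ring.
  rewrite e; set A := (F s' (lam s') - _ - _); set B := (F s' (lam s) - _ + _).
  rewrite Fl Fl' subr0 addr0 normrN.
  apply: le_trans (ler_normD _ _) _; apply: lerD; [exact: (K1 s' _ _ As' Al' Al) | exact: (K2 s' s _ As' As Al)].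
have KE1 : forall s s', Iclosed tbar s -> Iclosed tbar s' ->
    (1 - z) * `|lam s' - lam s| <= (1 + z) * `|s' - s|.
  move=> s s' As As'; have := KE s s' As As'.
  have := ler_normD (lam s' - lam s - (s' - s)) (s' - s); rewrite subrK; lra.
have KE2 : forall s s', Iclosed tbar s -> Iclosed tbar s' ->
    (1 - z) * `|s' - s| <= (1 + z) * `|lam s' - lam s|.
  move=> s s' As As'; have := KE s s' As As'.
  have := ler_normB (lam s' - lam s) (lam s' - lam s - (s' - s)).
  rewrite opprB addrC subrK; lra.
have mono : forall s s', Iclosed tbar s -> Iclosed tbar s' -> s < s' -> lam s < lam s'.
  move=> s s' As As' ss'; rewrite ltNge; apply/negP => hle.
  have := KE s s' As As'.
  rewrite (ltr0_norm (x := lam s' - lam s - (s' - s))); last by lra.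
  rewrite (ler0_norm (x := lam s' - lam s)); last by lra.
  rewrite (gtr0_norm (x := s' - s)); last by lra.
  nra.
have lam0 : lam 0 = 0 by have [? ?] := lamP 0 A0; symmetry; exact: uniq F00 _.
have lamt : lam tbar = tbar by have [? ?] := lamP tbar At; symmetry; exact: uniq Ftt _.
have ex2 : forall t, Iclosed tbar t -> exists s, Iclosed tbar s /\ lam s = t.
  move=> t At'; have [t0' t1'] := IcE t At'.
  have [c [/andP[c0 c1] hc]] : exists c, 0 <= c <= tbar /\ - F c t = 0.
    apply: (@exists_zero _ 0 tbar (1 + z)) => //.
    - by rewrite ltW.
    - lra.
    - have := K1 0 t 0 A0 At' A0; rewrite F00 subr0 subr0 (ger0_norm t0') ler_norml => /andP[h _].
      have : z * t <= t by nra.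
      lra.
    - have hts : 0 <= tbar - t by lra.
      have := K1 tbar t tbar At At' At; rewrite Ftt subr0 (distrC t) (ger0_norm hts).
      rewrite ler_norml => /andP[_ h]; have : z * (tbar - t) <= tbar - t by nra.
      lra.
    - move=> x y x0 xy yb.
      have hyx : 0 <= y - x by lra.
      have := K2 y x t (IcI y ltac:(lra) yb) (IcI x x0 ltac:(lra)) At'.
      rewrite (ger0_norm hyx) ler_norml => /andP[h _]; lra.
  have Ac := IcI c c0 c1.
  exists c; split => //; have [? ?] := lamP c Ac; symmetry; apply: uniq Ac _ _ _ _ => //.
  by move/eqP: hc; rewrite oppr_eq0 => /eqP.
pose lami := fun t => xget 0 [set s | Iclosed tbar s /\ lam s = t].
have lamiP : forall t, Iclosed tbar t -> Iclosed tbar (lami t) /\ lam (lami t) = t.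
  move=> t At'; exact: (xgetPex 0 (ex2 t At')).
have c10 : 0 < 1 - z by lra.
have c20 : 0 < 1 + z by lra.
have lamB : forall x y, Iclosed tbar x -> Iclosed tbar y ->
    (1 - z) / (1 + z) * `|x - y| <= `|lam x - lam y| <= (1 + z) / (1 - z) * `|x - y|.
  move=> x y Ax Ay; apply/andP; split.
    by apply: divge => //; exact: KE2.
  by apply: divle => //; exact: KE1.
have lamiB : forall x y, Iclosed tbar x -> Iclosed tbar y ->
    (1 - z) / (1 + z) * `|x - y| <= `|lami x - lami y| <= (1 + z) / (1 - z) * `|x - y|.
  move=> x y Ax Ay; have [Ax' hx] := lamiP x Ax; have [Ay' hy] := lamiP y Ay.
  apply/andP; split.
    by apply: divge => //; have := KE1 (lami y) (lami x) Ay' Ax'; rewrite hx hy.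
  by apply: divle => //; have := KE2 (lami y) (lami x) Ay' Ax'; rewrite hx hy.
exists lam, lami; split.
  split; first by move=> s As; case: (lamP s As).
  split; first by move=> s As; case: (lamiP s As).
  split.
    move=> s As; split; last by case: (lamiP s As).
    have [Al _] := lamP s As; have [As' h] := lamiP (lam s) Al.
    have := KE2 s (lami (lam s)) As As'; rewrite h subrr normr0 mulr0 => hh.
    have : `|lami (lam s) - s| <= 0 by have := normr_ge0 (lami (lam s) - s); nra.
    by rewrite normr_le0 subr_eq0 => /eqP.
  split; first exact: mono.
  split.
    exists ((1 + z) / (1 - z)) => x y Ax Ay; by have /andP[_ ->] := lamB x y Ax Ay.
  exists ((1 + z) / (1 - z)) => x y Ax Ay; by have /andP[_ ->] := lamiB x y Ax Ay.
split; first by move=> s As; case: (lamP s As).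
split.
  move=> s l As Al h; have [? ?] := lamP s As; exact: uniq h _.
split; first by split.
by split; apply: lipc_bounds.
Qed.


Lemma horizP {R : realType} (f1 f2 g1 g2 : R -> R) s l :
  in_horiz (pcurve f1 g1 s) (hsub (pcurve f2 g2 l) (pcurve f1 g1 s)) <->
  l - s + 2 * (g2 l - g1 s) * (f2 l + f1 s) = 0.
Proof.
rewrite /in_horiz /hsub /pcurve /Xvec /Yvec /=; split.
  move=> [a [b [ha hb hc]]].
  have {}ha : a = f2 l - f1 s by rewrite ha; ring.
  have {}hb : b = g2 l - g1 s by rewrite hb; ring.
  subst a b.
  move/eqP: hc; rewrite -subr_eq0 => /eqP hc.
  by apply: etrans hc; ring.
move=> h; exists (f2 l - f1 s), (g2 l - g1 s); congr (_, _, _); try ring.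
apply/eqP; rewrite -subr_eq0; apply/eqP; apply: etrans h; ring.
Qed.

Lemma le_maxL {R : realType} (x y : R) : x <= Num.max x y.
Proof. by rewrite le_max lexx. Qed.
Lemma le_maxR {R : realType} (x y : R) : y <= Num.max x y.
Proof. by rewrite le_max lexx orbT. Qed.

Lemma all_bounds {R : realType} {tbar : R} {f : R -> R} :
  0 < tbar -> is_lip_on f (Iopen tbar) ->
  (forall x, Iclosed tbar x -> happrox tbar f x) ->
  (forall x, Iclosed tbar x -> `|f x| <= supnorm f (Iopen tbar)) /\
  (forall x y, Iclosed tbar x -> Iclosed tbar y ->
     `|f x - f y| <= lipc f (Iopen tbar) * `|x - y|).
Proof.
move=> t0 lf ap; apply: ext_bounds => //.
- exact: lipc_ge0.
- by apply: supnorm_ge; exact: bounded_of_lip t0 lf.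
- exact: lipc_ge.
Qed.

Arguments approx_cont {R tbar f}.
Arguments approx_phi {R tbar B g phi}.
Arguments lipc_ge0 {R f tbar}.

Theorem theorem2p1 (R : realType) (tbar : R) (g1 g2 : R -> R)
  (phi : R * R -> R) :
  0 < tbar ->
  (* gamma_i Lipschitz on I, extended continuously to the closure of I *)
  is_lip_on g1 (Iopen tbar) -> is_lip_on g2 (Iopen tbar) ->
  {within (Iclosed tbar), continuous g1} -> {within (Iclosed tbar), continuous g2} ->
  (forall s, (Iopen tbar) s -> g1 s < 0 < g2 s) ->
  g1 0 = 0 -> g1 tbar = 0 -> g2 0 = 0 -> g2 tbar = 0 ->
  (* phi continuous on the boundary of D, phi_i Lipschitz on I *)
  {within bdry (domD tbar g1 g2), continuous phi} ->
  let phi1 := fun s => phi (g1 s, s) in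
  let phi2 := fun s => phi (g2 s, s) in
  is_lip_on phi1 (Iopen tbar) -> is_lip_on phi2 (Iopen tbar) ->
  let zeta :=
    4 * (Num.max (supnorm g1 (Iopen tbar)) (supnorm g2 (Iopen tbar))
         + Num.max (lipc g1 (Iopen tbar)) (lipc g2 (Iopen tbar)))
      * (Num.max (supnorm phi1 (Iopen tbar)) (supnorm phi2 (Iopen tbar))
         + Num.max (lipc phi1 (Iopen tbar)) (lipc phi2 (Iopen tbar))) in
  zeta < 1 ->
  let p1 := pcurve phi1 g1 in
  let p2 := pcurve phi2 g2 in
  exists lam lami : R -> R,
    (* lam : [0,tbar] -> [0,tbar] is an increasing bijection with inverse lami,
       both Lipschitz (i.e. lam is bi-Lipschitz) *)
    ((forall s, (Iclosed tbar) s -> (Iclosed tbar) (lam s)) /\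
        (forall s, (Iclosed tbar) s -> (Iclosed tbar) (lami s)) /\
        (forall s, (Iclosed tbar) s -> lami (lam s) = s /\ lam (lami s) = s) /\
        (forall s s', (Iclosed tbar) s -> (Iclosed tbar) s' -> s < s' -> lam s < lam s') /\
        is_lip_on lam (Iclosed tbar) /\ is_lip_on lami (Iclosed tbar)) /\
    (* (i) *)
    (forall s, (Iclosed tbar) s -> in_horiz (p1 s) (hsub (p2 (lam s)) (p1 s))) /\
    (* (ii) *)
    (forall s l, (Iclosed tbar) s -> (Iclosed tbar) l ->
       in_horiz (p1 s) (hsub (p2 l) (p1 s)) -> l = lam s) /\
    (* (iii) *)
    (lam 0 = 0 /\ lam tbar = tbar) /\
    (* (iv) *)
    ((1 - zeta) / (1 + zeta) <= lipc lam (Iclosed tbar) <= (1 + zeta) / (1 - zeta) /\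
     (1 - zeta) / (1 + zeta) <= lipc lami (Iclosed tbar) <= (1 + zeta) / (1 - zeta)).
Proof.
move=> t0 lip1 lip2 cg1 cg2 hg g10 g1t g20 g2t cphi phi1 phi2 lp1 lp2 zeta hz p1 p2.
have [bg1 lg1] := all_bounds t0 lip1 (approx_cont t0 cg1).
have [bg2 lg2] := all_bounds t0 lip2 (approx_cont t0 cg2).
have [bf1 lf1] := all_bounds t0 lp1
  (approx_phi t0 g10 g1t cg1 cphi (bd_0 t0 hg) (bd_t t0 hg) (bd_g1 hg)).
have [bf2 lf2] := all_bounds t0 lp2
  (approx_phi t0 g20 g2t cg2 cphi (bd_0 t0 hg) (bd_t t0 hg) (bd_g2 hg)).
have Lg0 : 0 <= Num.max (lipc g1 (Iopen tbar)) (lipc g2 (Iopen tbar)).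
  exact: le_trans (lipc_ge0 t0 lip1) (le_maxL _ _).
have Lp0 : 0 <= Num.max (lipc phi1 (Iopen tbar)) (lipc phi2 (Iopen tbar)).
  exact: le_trans (lipc_ge0 t0 lp1) (le_maxL _ _).
have := @core_thm _ tbar g1 g2 phi1 phi2 _ _ _ _ t0 hz Lg0 Lp0
  (fun x Ax => le_trans (bg1 x Ax) (le_maxL _ _))
  (fun x Ax => le_trans (bg2 x Ax) (le_maxR _ _))
  (fun x Ax => le_trans (bf1 x Ax) (le_maxL _ _))
  (fun x Ax => le_trans (bf2 x Ax) (le_maxR _ _))
  (fun x y Ax Ay => le_trans (lg1 x y Ax Ay) (ler_wpM2r (normr_ge0 _) (le_maxL _ _)))
  (fun x y Ax Ay => le_trans (lg2 x y Ax Ay) (ler_wpM2r (normr_ge0 _) (le_maxR _ _)))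
  (fun x y Ax Ay => le_trans (lf1 x y Ax Ay) (ler_wpM2r (normr_ge0 _) (le_maxL _ _)))
  (fun x y Ax Ay => le_trans (lf2 x y Ax Ay) (ler_wpM2r (normr_ge0 _) (le_maxR _ _)))
  g10 g1t g20 g2t.
move=> [lam [lami [H1 [Hi [Hii [Hiii Hiv]]]]]].
exists lam, lami; split => //; split.
  by move=> s As; apply/horizP; exact: Hi.
split => //.
by move=> s l As Al /horizP h; exact: Hii.
Qed.
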